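(* Let $n\geq 0$, $m\geq 2$ with $m$ even, and $1\leq a\leq 9$. Then $B_n \neq a\left(\frac{10^m-1}{9}\right)$. Consequently, if $B_n = a\frac{10^m-1}{9}$ for some $m\geq 2$ and $1\le a\le 9$, then $m$ is odd.
   Context: The balancing sequence $(B_n)_{n\geq 0}$ is defined by $B_0=0$, $B_1=1$ and $B_{n+1}=6B_n-B_{n-1}$ for $n\geq 1$. For $1\le a\le 9$ and $m\ge 1$, the number $a\frac{10^m-1}{9}$ is the decimal integer consisting of $m$ copies of the digit $a$. *)

(* Defs.v *)
From Stdlib Require Import ZArith.
Open Scope Z_scope.

Fixpoint balancing (n : nat) : Z :=
  match n with
  | O => 0
  | S O => 1
  | S ((S k) as k1) => 6 * balancing k1 - balancing k
  end.

(* The integer consisting of m copies of digit a: a * (10^m - 1)/9.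
   (10^m - 1 is divisible by 9, so Z.div is exact here.) *)
Definition repdigit (a : Z) (m : nat) : Z := a * ((10 ^ Z.of_nat m - 1) / 9).

(* Main.v *)
Require Import Defs.
From Stdlib Require Import ZArith Arith List Lia.
Open Scope Z_scope.

Definition stp (p : Z * Z) : Z * Z := (snd p, (6 * snd p - fst p) mod 110).
Fixpoint gen (k : nat) (p : Z * Z) : list (Z * Z) :=
  match k with O => nil | S k' => p :: gen k' (stp p) end.
Definition L := gen 200 (0, 1).
Definition peq (p q : Z * Z) : bool := (fst p =? fst q) && (snd p =? snd q).
Lemma closed : forallb (fun p => existsb (peq (stp p)) L) L = true.
Proof. vm_compute. reflexivity. Qed.
Lemma good : forallb (fun p => negb ((fst p mod 11 =? 0) && negb (fst p mod 10 =? 0))) L = true.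
Proof. vm_compute. reflexivity. Qed.

Lemma bal_SS n : balancing (S (S n)) = 6 * balancing (S n) - balancing n.
Proof. reflexivity. Qed.

Lemma inv n : In (balancing n mod 110, balancing (S n) mod 110) L.
Proof.
  induction n.
  - simpl. left. reflexivity.
  - change (In (balancing (S n) mod 110, balancing (S (S n)) mod 110) L).
    pose proof closed as C. rewrite forallb_forall in C.
    specialize (C _ IHn). apply existsb_exists in C. destruct C as [[x y] [Hin Heq]].
    unfold peq, stp in Heq; cbv [fst snd] in Heq. apply andb_prop in Heq. destruct Heq as [H1 H2].
    apply Z.eqb_eq in H1. apply Z.eqb_eq in H2.
    rewrite bal_SS.
    assert (Hm : (6 * balancing (S n) - balancing n) mod 110
      = (6 * (balancing (S n) mod 110) - balancing n mod 110) mod 110).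
    { rewrite Zminus_mod. rewrite (Zminus_mod (6 * (balancing (S n) mod 110))).
      rewrite (Zmult_mod 6 (balancing (S n))). rewrite (Zmult_mod 6 (balancing (S n) mod 110)).
      rewrite !Zmod_mod. reflexivity. }
    rewrite Hm, H2, H1. exact Hin.
Qed.

Lemma pow100 k : (1 <= k)%nat -> 10 ^ (2 * Z.of_nat k) mod 990 = 100.
Proof.
  intros Hk. induction k. lia.
  destruct k. reflexivity.
  rewrite Nat2Z.inj_succ.
  replace (2 * Z.succ (Z.of_nat (S k))) with (2 + 2 * Z.of_nat (S k)) by lia.
  rewrite Z.pow_add_r by lia. rewrite Zmult_mod, IHk by lia. reflexivity.
Qed.

Lemma rep_mod (k : nat) (a : Z) : (1 <= k)%nat -> repdigit a (2 * k) mod 110 = (11 * a) mod 110.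
Proof.
  intros Hk. unfold repdigit. rewrite Nat2Z.inj_mul. simpl (Z.of_nat 2).
  pose proof (pow100 k Hk) as H.
  pose proof (Z.div_mod (10 ^ (2 * Z.of_nat k)) 990 ltac:(lia)) as D.
  rewrite H in D. set (q := 10 ^ (2 * Z.of_nat k) / 990) in D. rewrite D.
  replace (990 * q + 100 - 1) with ((110 * q + 11) * 9) by ring.
  rewrite Z.div_mul by lia.
  replace (a * (110 * q + 11)) with (11 * a + (a * q) * 110) by ring.
  rewrite Z_mod_plus_full. reflexivity.
Qed.

Theorem mainTheorem2 :
  (forall (n m : nat) (a : Z),
      (2 <= m)%nat -> Nat.Even m -> 1 <= a <= 9 ->
      balancing n <> repdigit a m)
  /\
  (forall (n m : nat) (a : Z),
      (2 <= m)%nat -> 1 <= a <= 9 ->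
      balancing n = repdigit a m -> Nat.Odd m).
Proof.
  assert (P1 : forall (n m : nat) (a : Z),
      (2 <= m)%nat -> Nat.Even m -> 1 <= a <= 9 ->
      balancing n <> repdigit a m).
  { intros n m a Hm [k Hk] Ha E. subst m.
    assert (Hk1 : (1 <= k)%nat) by lia.
    pose proof (rep_mod k a Hk1) as R. rewrite <- E in R.
    pose proof good as G. rewrite forallb_forall in G.
    specialize (G _ (inv n)). simpl in G.
    rewrite R in G.
    assert (a = 1 \/ a = 2 \/ a = 3 \/ a = 4 \/ a = 5 \/ a = 6 \/ a = 7 \/ a = 8 \/ a = 9) by lia.
    repeat destruct H as [H|H]; subst a; discriminate G. }
  split; [exact P1|].
  intros n m a Hm Ha E. destruct (Nat.Even_or_Odd m) as [He|Ho]; [|exact Ho].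
  exfalso. exact (P1 n m a Hm He Ha E).
Qed.
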